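(* Let $S=\{s_f^h : f\in\{1,\dots,F\},\ h\in\{1,\dots,H\}\}$ and, for $X\subseteq S$, let $\mathbf{X}(X)\in\{0,1\}^{F\times H}$ be given by $x_{f,h}=1$ iff $s_f^h\in X$. Define the set function $G:2^S\to\mathbb{R}$ by $$G(X)=\sum_{u=1}^U\big(\omega_{0,u}-\bar D_u(\mathbf{X}(X))\big),$$ where, for a placement $\mathbf{X}$, $$\bar D_u=\sum_{j=1}^{|\mathcal{H}(u)|-1}\omega_{(j)_u,u}\sum_{f=1}^F\Big[\prod_{i=1}^{j-1}(1-x_{f,(i)_u})\Big]x_{f,(j)_u}P_f+\omega_{0,u}\sum_{f=1}^F\Big[\prod_{i=1}^{|\mathcal{H}(u)|-1}(1-x_{f,(i)_u})\Big]P_f.$$ Then $G$ is a monotone (nondecreasing) submodular set function.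
   Context: Setting: helpers $\{0,1,\dots,H\}$, where helper $0$ is the base station; users $\{1,\dots,U\}$; files $\{1,\dots,F\}$ with request probabilities $P_f\ge 0$, $\sum_f P_f=1$. A bipartite graph with edge set $\mathcal{E}$ between helpers and users, with $(0,u)\in\mathcal{E}$ for all $u$; $\mathcal{H}(u)=\{h:(h,u)\in\mathcal{E}\}$ (so $0\in\mathcal{H}(u)$). Nonnegative reals $\omega_{h,u}$ (average download time per bit on link $(h,u)$) satisfy $\omega_{0,u}\ge\omega_{h,u}$ for all $(h,u)\in\mathcal{E}$, and $\omega_{h,u}=\omega_\infty$ for $(h,u)\notin\mathcal{E}$, where $\omega_\infty$ is a constant much larger than $\max_u\omega_{0,u}$. For each user $u$, $(j)_u$ denotes the helper in $\mathcal{H}(u)$ with the $j$-th smallest delay $\omega_{(j)_u,u}$, with the ordering chosen so that $(|\mathcal{H}(u)|)_u=0$ (the base station is last). Conventions: an empty product equals $1$, an empty sum equals $0$. Set functions: $G$ is submodular if $G(A\cup\{i\})-G(A)\ge G(B\cup\{i\})-G(B)$ for all $A\subseteq B\subseteq S$ and $i\in S\setminus B$; monotone if $A\subseteq B$ implies $G(A)\le G(B)$. *)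

(* Defs.v *)
From mathcomp Require Import all_boot all_order all_algebra.
Set Implicit Arguments. Unset Strict Implicit. Unset Printing Implicit Defensive.
Import Order.TTheory GRing.Theory Num.Theory.
Local Open Scope ring_scope.

Definition set_submodular (R : realDomainType) (S : finType) (G : {set S} -> R) :=
  forall (A B : {set S}) (i : S), A \subset B -> i \notin B ->
    G (i |: B) - G B <= G (i |: A) - G A.

Definition set_monotone (R : realDomainType) (S : finType) (G : {set S} -> R) :=
  forall A B : {set S}, A \subset B -> G A <= G B.

(* Helpers are 'I_H.+1 (0 = base station); S = 'I_F * 'I_H, where the pair
   (f, h') stands for s_f^h with h = h'+1 (i.e. lift ord0 h'). *)
Definition xplace (H F : nat) (X : {set 'I_F * 'I_H}) (f : 'I_F) (h : 'I_H.+1) : bool :=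
  if unlift ord0 h is Some h' then (f, h') \in X else false.

(* Average delay of user u; s = ordered list (j)_u, j = 1..|H(u)| (0-indexed here). *)
Definition Dbar (R : realDomainType) (H U F : nat) (P : 'I_F -> R)
  (omega : 'I_H.+1 -> 'I_U -> R) (s : seq 'I_H.+1) (u : 'I_U)
  (X : {set 'I_F * 'I_H}) : R :=
  let x f h := ((xplace X f h : nat)%:R : R) in
  \sum_(j < (size s).-1)
     omega (nth ord0 s j) u *
     \sum_(f < F) (\prod_(i < j) (1 - x f (nth ord0 s i))) * x f (nth ord0 s j) * P f
  + omega ord0 u *
     \sum_(f < F) (\prod_(i < (size s).-1) (1 - x f (nth ord0 s i))) * P f.

Definition Gfun (R : realDomainType) (H U F : nat) (P : 'I_F -> R)
  (omega : 'I_H.+1 -> 'I_U -> R) (ordh : 'I_U -> seq 'I_H.+1)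
  (X : {set 'I_F * 'I_H}) : R :=
  \sum_(u < U) (omega ord0 u - Dbar P omega (ordh u) u X).

(* Main.v *)
Require Import Defs.
From mathcomp Require Import all_boot all_order all_algebra.
From mathcomp Require Import ring.
Import Order.TTheory GRing.Theory Num.Theory.
Local Open Scope ring_scope.

Fixpoint fh (R : realDomainType) (T : eqType) (w : T -> R) (d : R) (c : T -> bool)
  (t : seq T) : R :=
  match t with [::] => d | a :: t' => if c a then w a else fh R T w d c t' end.

Arguments fh {R T} w d c t.
Lemma fh_lb (R : realDomainType) (T : eqType) (w : T -> R) d c t m :
  (forall x, x \in t -> m <= w x) -> m <= d -> m <= fh w d c t.
Proof.
elim: t => [|a t IH] //= hm hd.
case: (c a); first by apply: hm; rewrite inE eqxx.
by apply: IH => // x hx; apply: hm; rewrite inE hx orbT.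
Qed.

Lemma fh_mono (R : realDomainType) (T : eqType) (w : T -> R) d (cA cB : T -> bool) t :
  sorted (fun a b => w a <= w b) t -> all (fun x => w x <= d) t ->
  (forall h, cA h -> cB h) -> fh w d cB t <= fh w d cA t.
Proof.
move=> + + hAB; elim: t => [|a t IH] //= hs /andP[ha hall].
have hs' := path_sorted hs.
case: (boolP (cA a)) => hA; first by rewrite (hAB _ hA).
case: (boolP (cB a)) => hB; last exact: IH.
apply: fh_lb => // x hx.
have htr : transitive (fun a b : T => w a <= w b) by move=> y x' z h1 h2; exact: le_trans h1 h2.
have := order_path_min htr hs.
by move/allP/(_ x hx).
Qed.

Lemma fh_sub (R : realDomainType) (T : eqType) (w : T -> R) d (cA cB cA' cB' p : T -> bool) t :
  sorted (fun a b => w a <= w b) t -> all (fun x => w x <= d) t ->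
  (forall h, cA h -> cB h) ->
  (forall h, cA' h = p h || cA h) -> (forall h, cB' h = p h || cB h) ->
  fh w d cB t - fh w d cB' t <= fh w d cA t - fh w d cA' t.
Proof.
move=> + + hAB hA' hB'; elim: t => [|a t IH] //= hs /andP[ha hall].
have hs' := path_sorted hs.
rewrite hA' hB'.
case: (boolP (cA a)) => hA; first by rewrite (hAB _ hA) !orbT.
rewrite ?orbF.
case: (boolP (cB a)) => hB.
  rewrite orbT subrr subr_ge0.
  have hsub : forall h, cA h -> cA' h by move=> h hh; rewrite hA' hh orbT.
  have := @fh_mono R T w d cA cA' (a :: t) hs (introT andP (conj ha hall)) hsub.
  by rewrite /= hA' (negbTE hA) orbF.
rewrite ?orbF.
case: (p a); last exact: IH.
rewrite lerD2r; exact: fh_mono.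
Qed.

Lemma fhE (R : realDomainType) (T : eqType) (w : T -> R) d (c : T -> bool) (x0 : T) t :
  let x h := ((c h : nat)%:R : R) in
  \sum_(j < size t) w (nth x0 t j) * ((\prod_(i < j) (1 - x (nth x0 t i))) * x (nth x0 t j))
  + d * \prod_(i < size t) (1 - x (nth x0 t i)) = fh w d c t.
Proof.
move=> x; elim: t => [|a t IH] /=; first by rewrite big_ord0 big_ord0 add0r mulr1.
rewrite big_ord_recl [X in _ + _ * X]big_ord_recl /= big_ord0 mul1r.
rewrite /x; case ha: (c a) => /=.
  rewrite subrr big1 ?mul0r ?mulr0 ?addr0 ?mulr1 //.
  by move=> j _; rewrite /bump leq0n add1n big_ord_recl /= ha subrr !mul0r mulr0.
rewrite subr0 mulr0 add0r mul1r -IH; congr (_ + _).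
by apply: eq_bigr => j _; rewrite /bump leq0n add1n big_ord_recl /= ha subr0 mul1r.
Qed.

Lemma DbarE (R : realDomainType) (H U F : nat) (P : 'I_F -> R)
  (omega : 'I_H.+1 -> 'I_U -> R) (s : seq 'I_H.+1) (u : 'I_U)
  (X : {set 'I_F * 'I_H}) :
  Dbar P omega s u X = \sum_(f < F) P f *
    fh (fun h => omega h u) (omega ord0 u) (xplace X f) (take (size s).-1 s).
Proof.
rewrite /Dbar.
set n := (size s).-1.
have hn : size (take n s) = n by rewrite size_takel // /n leq_pred.
set t := take n s.
have hnth : forall i, (i < n)%N -> nth ord0 s i = nth ord0 t i.
  by move=> i hi; rewrite /t nth_take.
under [RHS]eq_bigr => f _ do rewrite -(fhE _ _ _ _ _ ord0) hn.
under [RHS]eq_bigr => f _ do rewrite mulrDr mulr_sumr.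
rewrite big_split /= exchange_big /=; congr (_ + _).
  apply: eq_bigr => j _; rewrite mulr_sumr; apply: eq_bigr => f _.
  have hp : \prod_(i < j) (1 - (xplace X f (nth ord0 t i))%:R) =
      \prod_(i < j) (1 - (xplace X f (nth ord0 s i))%:R) :> R.
    by apply: eq_bigr => i _; rewrite hnth // (ltn_trans (ltn_ord i) (ltn_ord j)).
  rewrite hp -hnth //; ring.
rewrite mulr_sumr; apply: eq_bigr => f _.
have hp : \prod_(i < n) (1 - (xplace X f (nth ord0 t i))%:R) =
    \prod_(i < n) (1 - (xplace X f (nth ord0 s i))%:R) :> R.
  by apply: eq_bigr => i _; rewrite hnth.
rewrite hp; ring.
Qed.

Lemma xplaceU (H F : nat) (X : {set 'I_F * 'I_H}) i f h :
  xplace (i |: X) f h =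
  (if unlift ord0 h is Some h' then (f, h') == i else false) || xplace X f h.
Proof. by rewrite /xplace; case: (unlift ord0 h) => // h'; rewrite in_setU1. Qed.

Lemma xplaceS (H F : nat) (A B : {set 'I_F * 'I_H}) f h :
  A \subset B -> xplace A f h -> xplace B f h.
Proof. by move=> /subsetP hAB; rewrite /xplace; case: (unlift ord0 h) => // h'; apply: hAB. Qed.

Theorem mainTheorem3 (R : realFieldType) (H U F : nat)
  (P : 'I_F -> R)
  (hP0 : forall f, 0 <= P f)
  (hP1 : \sum_(f < F) P f = 1)
  (E : 'I_H.+1 -> 'I_U -> bool)
  (hE0 : forall u, E ord0 u)
  (omega : 'I_H.+1 -> 'I_U -> R) (omega_inf : R)
  (homega_nonneg : forall h u, E h u -> 0 <= omega h u)
  (homega_base : forall h u, E h u -> omega h u <= omega ord0 u)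
  (homega_inf : forall h u, ~~ E h u -> omega h u = omega_inf)
  (homega_inf_large : forall u, omega ord0 u < omega_inf)
  (ordh : 'I_U -> seq 'I_H.+1)
  (hord_uniq : forall u, uniq (ordh u))
  (hord_mem : forall u h, (h \in ordh u) = E h u)
  (hord_sorted : forall u, sorted (fun a b => omega a u <= omega b u) (ordh u))
  (hord_last : forall u, last ord0 (ordh u) = ord0) :
  set_monotone (Gfun P omega ordh) /\ set_submodular (Gfun P omega ordh).
Proof.
have hs u : sorted (fun a b => omega a u <= omega b u) (take (size (ordh u)).-1 (ordh u)).
  exact: take_sorted.
have ha u : all (fun x => omega x u <= omega ord0 u) (take (size (ordh u)).-1 (ordh u)).
  apply/allP => x hx; apply: homega_base; rewrite -hord_mem; exact: mem_take hx.
split.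
  move=> A B hAB; rewrite /Gfun; apply: ler_sum => u _.
  rewrite lerD2l lerN2 !DbarE; apply: ler_sum => f _.
  apply: ler_wpM2l => //; apply: fh_mono => // h; exact: xplaceS.
move=> A B i hAB _.
have GD : forall Y Z, Gfun P omega ordh Y - Gfun P omega ordh Z =
    \sum_(u < U) (Dbar P omega (ordh u) u Z - Dbar P omega (ordh u) u Y).
  by move=> Y Z; rewrite /Gfun -sumrB; apply: eq_bigr => u _; ring.
rewrite !GD; apply: ler_sum => u _.
rewrite !DbarE -!sumrB; apply: ler_sum => f _.
rewrite -!mulrBr; apply: ler_wpM2l => //.
apply: fh_sub => //.
- move=> h; exact: xplaceS.
- move=> h; exact: xplaceU.
- move=> h; exact: xplaceU.
Qed.
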